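(* Every SSSCG in which the leader's cost functions are weakly monotonic and the followers' cost functions are strictly monotonic has the following property: if it admits a PSE $(\sigma_\ell,\nu)$ with $\sigma_\ell$ mixed, then it also admits a PSE $(\hat\sigma_\ell,\hat\nu)$ with $\hat\sigma_\ell$ pure; in particular, it admits a PSE in which the leader's strategy is pure.
   Context: A symmetric Stackelberg singleton congestion game (SSSCG) consists of a leader $\ell$, a finite set $F$ of followers, a finite set $R$ of resources which every player may select (each player selects exactly one), and cost functions $c_{i,\ell},c_{i,f}:\mathbb N\to\mathbb Q$ ($i\in R$) for the leader and the followers with $c_{i,\ell}(0)=c_{i,f}(0)=0$. The leader commits to a probability distribution $\sigma_\ell$ on $R$ (pure if it puts probability $1$ on one resource). A followers' configuration is $\nu\in\mathbb N^R$ with $\sum_i\nu_i=|F|$. The followers' expected cost of resource $i$ with $x$ followers is $c^{\sigma_\ell}_{i,f}(x)=\sigma_\ell(i)c_{i,f}(x+1)+(1-\sigma_\ell(i))c_{i,f}(x)$; the leader's cost is $c_\ell^{(\sigma_\ell,\nu)}=\sum_{i\in R}\sigma_\ell(i)c_{i,\ell}(\nu_i+1)$. $\nu$ is a Nash equilibrium for $\sigma_\ell$ ($\nu\in E^{\sigma_\ell}$) if for all $i$ with $\nu_i>0$ and all $j\ne i$, $c^{\sigma_\ell}_{i,f}(\nu_i)\le c^{\sigma_\ell}_{j,f}(\nu_j+1)$. A pessimistic Stackelberg equilibrium (PSE) is a pair $(\sigma_\ell,\nu)$ such that $\sigma_\ell$ attains the minimum over all leader strategies of $\max_{\nu'\in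 E^{\sigma_\ell}}c_\ell^{(\sigma_\ell,\nu')}$ and $\nu\in E^{\sigma_\ell}$ attains that maximum. Weakly monotonic leader costs: $c_{i,\ell}(x)\le c_{i,\ell}(x+1)$ for all $i,x$; strictly monotonic follower costs: $c_{i,f}(x)<c_{i,f}(x+1)$ for all $i,x$. *)

(* Defs.v *)
From HB Require Import structures.
From mathcomp Require Import all_boot all_order all_algebra.
Set Implicit Arguments. Unset Strict Implicit. Unset Printing Implicit Defensive.
Import Order.TTheory GRing.Theory Num.Theory.
Local Open Scope ring_scope.

(* Symmetric Stackelberg singleton congestion game.
   - K : realFieldType, the ordered field in which leader probabilities live
     (the paper: real numbers);
   - Res : finType, the resources;
   - Fol : finType, the followers (only #|Fol| matters);
   - cl i x = c_{i,l}(x), cf i x = c_{i,f}(x), rational-valued. *)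

Definition is_strategy (K : realFieldType) (Res : finType) (s : Res -> K) : Prop :=
  (forall i, 0 <= s i) /\ \sum_(i : Res) s i = 1.

Definition is_pure (K : realFieldType) (Res : finType) (s : Res -> K) : Prop :=
  exists i, s i = 1.

Definition is_config (Res Fol : finType) (nu : Res -> nat) : Prop :=
  (\sum_(i : Res) nu i)%N = #|Fol|.

Definition fcost (K : realFieldType) (Res : finType) (cf : Res -> nat -> rat)
  (s : Res -> K) (i : Res) (x : nat) : K :=
  s i * ratr (cf i x.+1) + (1 - s i) * ratr (cf i x).

Definition lcost (K : realFieldType) (Res : finType) (cl : Res -> nat -> rat)
  (s : Res -> K) (nu : Res -> nat) : K :=
  \sum_(i : Res) s i * ratr (cl i (nu i).+1).

Definition is_NE (K : realFieldType) (Res Fol : finType) (cf : Res -> nat -> rat)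
  (s : Res -> K) (nu : Res -> nat) : Prop :=
  is_config Fol nu /\
  forall i j : Res, (0 < nu i)%N -> i != j ->
    fcost cf s i (nu i) <= fcost cf s j (nu j).+1.

Definition is_PSE (K : realFieldType) (Res Fol : finType)
  (cl cf : Res -> nat -> rat) (s : Res -> K) (nu : Res -> nat) : Prop :=
  is_strategy s /\ is_NE Fol cf s nu /\
  (forall nu', is_NE Fol cf s nu' -> lcost cl s nu' <= lcost cl s nu) /\
  (forall s', is_strategy s' ->
     exists2 nu', is_NE Fol cf s' nu' & lcost cl s nu <= lcost cl s' nu').

(* Main.v *)
Require Import Defs.
From HB Require Import structures.
From mathcomp Require Import all_boot all_order all_algebra.
From mathcomp Require Import ring.
From Stdlib Require Import Classical ClassicalEpsilon FunctionalExtensionality.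
Import Order.TTheory GRing.Theory Num.Theory.
Local Open Scope ring_scope.

Section H.
Variables (K : rcfType) (Res Fol : finType) (cl cf : Res -> nat -> rat).
Hypothesis (hclmon : forall i x, cl i x <= cl i x.+1)
  (hcfmon : forall i x, cf i x < cf i x.+1).

Definition ev (j : Res) : Res -> K := fun i => (i == j)%:R.

Lemma cl_mono i m n : (m <= n)%N -> (ratr (cl i m) : K) <= ratr (cl i n).
Proof.
move=> h; rewrite ler_rat.
apply: (homo_leq (f := cl i) (r := fun a b => a <= b)) h => // y x z; exact: le_trans.
Qed.

Lemma cf_mono i m n : (m <= n)%N -> (ratr (cf i m) : K) <= ratr (cf i n).
Proof.
move=> h; rewrite ler_rat.
apply: (homo_leq (f := cf i) (r := fun a b => a <= b)) h => // [y x z|x]; first by apply: le_trans.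
exact: ltW.
Qed.

Lemma cf_lt i x : (ratr (cf i x) : K) < ratr (cf i x.+1).
Proof. by rewrite ltr_rat. Qed.

Lemma strat_le1 (s : Res -> K) i : is_strategy s -> s i <= 1.
Proof.
case=> h0 h1; rewrite -h1 (bigD1 i) //= lerDl.
by apply: sumr_ge0 => k _.
Qed.

Lemma ev_strat j : is_strategy (ev j).
Proof.
split=> [i|]; first by rewrite /ev; case: (i == j).
rewrite (bigD1 j) //= big1 ?addr0 /ev ?eqxx // => i /negbTE ->; done.
Qed.

Lemma fcost_ev_eq j x : fcost cf (ev j) j x = ratr (cf j x.+1).
Proof. by rewrite /fcost /ev eqxx subrr mul0r addr0 mul1r. Qed.

Lemma fcost_ev_neq j i x : i != j -> fcost cf (ev j) i x = ratr (cf i x).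
Proof. by move=> /negbTE h; rewrite /fcost /ev h mul0r add0r subr0 mul1r. Qed.

Lemma lcost_ev j nu : lcost cl (ev j) nu = ratr (cl j (nu j).+1).
Proof.
rewrite /lcost (bigD1 j) //= big1 ?addr0 /ev ?eqxx ?mul1r // => i /negbTE ->.
by rewrite mul0r.
Qed.

Lemma fcost_ge (s : Res -> K) i x : is_strategy s ->
  ratr (cf i x) <= fcost cf s i x.
Proof.
move=> hs; have h0 := hs.1 i.
have -> : fcost cf s i x = ratr (cf i x) + s i * (ratr (cf i x.+1) - ratr (cf i x)).
  by rewrite /fcost; ring.
rewrite lerDl; apply: mulr_ge0 => //; rewrite subr_ge0 ler_rat ltW //.
Qed.

Lemma fcost_lt (s : Res -> K) i x : is_strategy s -> s i < 1 ->
  fcost cf s i x < ratr (cf i x.+1).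
Proof.
move=> hs h1.
have d : 0 < (ratr (cf i x.+1) : K) - ratr (cf i x) by rewrite subr_gt0 cf_lt.
rewrite /fcost -subr_gt0.
have -> : ratr (cf i x.+1) - (s i * ratr (cf i x.+1) + (1 - s i) * ratr (cf i x))
   = (1 - s i) * (ratr (cf i x.+1) - ratr (cf i x)) :> K by ring.
by rewrite mulr_gt0 // subr_gt0.
Qed.

Lemma fcost_mono (s : Res -> K) i x : is_strategy s ->
  fcost cf s i x <= fcost cf s i x.+1.
Proof.
move=> hs; have h0 := hs.1 i; have h1 : s i <= 1 by apply: strat_le1.
rewrite /fcost; apply: lerD; apply: ler_wpM2l; rewrite ?subr_ge0 // ler_rat ltW //.
Qed.

Lemma fcost_monoN (s : Res -> K) i m n : is_strategy s -> (m <= n)%N ->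
  fcost cf s i m <= fcost cf s i n.
Proof.
move=> hs h.
apply: (homo_leq (f := fcost cf s i) (r := fun a b => a <= b)) h => // [y x z|x].
  exact: le_trans.
exact: fcost_mono.
Qed.


Lemma greedy (s : Res -> K) (k0 : Res) n : is_strategy s ->
  exists nu : Res -> nat, (\sum_i nu i)%N = n /\
    forall i j, (0 < nu i)%N -> fcost cf s i (nu i) <= fcost cf s j (nu j).+1.
Proof.
move=> hs; elim: n => [|n [nu [hsum hinv]]].
  by exists (fun _ => 0%N); split; [rewrite big1|].
set k := [arg min_(k < k0) fcost cf s k (nu k).+1]%O.
have hk : forall j, fcost cf s k (nu k).+1 <= fcost cf s j (nu j).+1.
  rewrite /k; case: arg_minP => // k' _ H j; exact: H.
exists (fun j => if j == k then (nu j).+1 else nu j); split.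
  rewrite (bigD1 k) //= eqxx -hsum [in RHS](bigD1 k) //= addSn; congr _.+1; congr (_ + _)%N.
  by apply: eq_bigr => i /negbTE ->.
have hmon : forall j, fcost cf s j (nu j).+1 <=
    fcost cf s j (if j == k then (nu j).+1 else nu j).+1.
  move=> j; case: (j == k) => //; exact: fcost_mono.
move=> i j /=; case: (eqVneq i k) => [-> _|/negbTE hik].
  apply: le_trans (hk j) (hmon j).
move=> hi; apply: le_trans (hinv i j hi) (hmon j).
Qed.

Lemma ne_exists (s : Res -> K) : (0 < #|Res|)%N -> is_strategy s ->
  exists nu, is_NE Fol cf s nu.
Proof.
move=> /card_gt0P [k0 _] hs.
have [nu [h1 h2]] := @greedy s k0 #|Fol| hs.
by exists nu; split=> // i j hi _; apply: h2.
Qed.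

Lemma key (s : Res -> K) i nu mu : is_strategy s -> s i < 1 ->
  is_NE Fol cf s nu -> is_NE Fol cf (ev i) mu -> (mu i <= nu i)%N.
Proof.
move=> hs hs1 [cn hn] [cm hm]; rewrite leqNgt; apply/negP => hlt.
have [k hki hk] : exists2 k, k != i & (mu k < nu k)%N.
  apply: NNPP => hne.
  have H : forall k, k != i -> (nu k <= mu k)%N.
    by move=> k hk; rewrite leqNgt; apply/negP => hh; apply: hne; exists k.
  have : (\sum_k nu k < \sum_k mu k)%N.
    rewrite (bigD1 i) //= [X in (_ < X)%N](bigD1 i) //=.
    apply: (@leq_ltn_trans (nu i + \sum_(k | k != i) mu k)); first by rewrite leq_add2l; apply: leq_sum.
    by rewrite ltn_add2r.
  by rewrite cn cm ltnn.
have hmu0 : (0 < mu i)%N by apply: leq_ltn_trans hlt.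
have hik : i != k by rewrite eq_sym.
have h1 := hm i k hmu0 hik.
rewrite fcost_ev_eq fcost_ev_neq // in h1.
have hnu0 : (0 < nu k)%N by apply: leq_ltn_trans hk.
have h2 := hn k i hnu0 hki.
have h3 : (ratr (cf k (mu k).+1) : K) <= fcost cf s k (nu k).
  by apply: (le_trans _ (fcost_ge s k (nu k) hs)); apply: cf_mono.
have h4 : fcost cf s i (nu i).+1 < ratr (cf i (mu i).+1).
  by apply: (lt_le_trans (fcost_lt s i (nu i).+1 hs hs1)); apply: cf_mono.
have := le_lt_trans h1 (le_lt_trans h3 (le_lt_trans h2 h4)).
by rewrite ltxx.
Qed.

Lemma bmax (P : nat -> Prop) b : (exists n, P n) -> (forall n, P n -> (n <= b)%N) ->
  exists n, P n /\ forall m, P m -> (m <= n)%N.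
Proof.
elim: b => [|b IH] [n hn] hb.
  exists n; split => // m hm; by have := hb m hm; rewrite leqn0 => /eqP ->.
case: (classic (P b.+1)) => h.
  by exists b.+1; split.
apply: IH; first by exists n.
move=> m hm; have := hb m hm; rewrite leq_eqVlt => /orP [/eqP e|//].
by rewrite e in hm.
Qed.


Lemma main_ex : (0 < #|Res|)%N ->
  exists (s : Res -> K) (nu : Res -> nat), is_PSE Fol cl cf s nu /\ is_pure s.
Proof.
move=> hRes.
have hmax : forall j, exists mu, is_NE Fol cf (ev j) mu /\
    forall mu', is_NE Fol cf (ev j) mu' -> (mu' j <= mu j)%N.
  move=> j.
  have [mu0 h0] := ne_exists (ev j) hRes (ev_strat j).
  pose P := fun n => exists mu, is_NE Fol cf (ev j) mu /\ mu j = n.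
  have [n [[mu [hmu en]] hn]] : exists n, P n /\ forall m, P m -> (m <= n)%N.
    apply: (bmax _ #|Fol|); first by exists (mu0 j), mu0.
    move=> n [mu [[hc _] <-]]; by rewrite -hc (bigD1 j) //= leq_addr.
  exists mu; split => // mu' h'; rewrite en; apply: hn; by exists mu'.
pose muf j := proj1_sig (constructive_indefinite_description _ (hmax j)).
have hmf : forall j, is_NE Fol cf (ev j) (muf j) /\
    forall mu', is_NE Fol cf (ev j) mu' -> (mu' j <= muf j j)%N.
  move=> j; exact: (proj2_sig (constructive_indefinite_description _ (hmax j))).
have [k0 _] := card_gt0P hRes.
set jst := [arg min_(j < k0) cl j (muf j j).+1]%O.
have hjst : forall j, cl jst (muf jst jst).+1 <= cl j (muf j j).+1.
  rewrite /jst; case: arg_minP => // k' _ H j; exact: H.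
exists (ev jst), (muf jst); split; last by exists jst; rewrite /ev eqxx.
split; first exact: ev_strat.
split; first exact: (hmf jst).1.
split.
  move=> nu' h'; rewrite !lcost_ev; apply: cl_mono; rewrite ltnS; exact: (hmf jst).2.
move=> s' hs'; rewrite lcost_ev.
case: (classic (exists i, s' i = 1)) => [[i0 hi0]|hnp].
  have -> : s' = ev i0.
    apply: functional_extensionality => k.
    case: (eqVneq k i0) => [->|hk]; first by rewrite /ev eqxx.
    rewrite /ev (negbTE hk).
    have := hs'.2; rewrite (bigD1 i0) //= hi0 => e.
    have e2 : \sum_(k | k != i0) s' k = 0 by apply: (addrI 1); rewrite e addr0.
    by apply: (psumr_eq0P _ e2) => // ? _; exact: hs'.1.
  exists (muf i0); first exact: (hmf i0).1.
  by rewrite lcost_ev ler_rat.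
have [nu' hnu'] := ne_exists s' hRes hs'.
exists nu' => //.
rewrite /lcost.
have -> : (ratr (cl jst (muf jst jst).+1) : K) =
    \sum_i s' i * ratr (cl jst (muf jst jst).+1) by rewrite -mulr_suml hs'.2 mul1r.
apply: ler_sum => i _; apply: ler_wpM2l; first exact: hs'.1.
apply: (le_trans (_ : _ <= ratr (cl i (muf i i).+1))); first by rewrite ler_rat.
apply: cl_mono; rewrite ltnS.
apply: (key s' i nu' (muf i)) => //; last exact: (hmf i).1.
rewrite lt_neqAle strat_le1 // andbT; apply/eqP => e; apply: hnp; by exists i.
Qed.

End H.

Theorem theorem8 (K : rcfType) (Res Fol : finType)
  (cl cf : Res -> nat -> rat)
  (hRes : (0 < #|Res|)%N)
  (hcl0 : forall i, cl i 0%N = 0) (hcf0 : forall i, cf i 0%N = 0)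
  (hclmon : forall i x, cl i x <= cl i x.+1)
  (hcfmon : forall i x, cf i x < cf i x.+1) :
  (forall (s : Res -> K) (nu : Res -> nat),
      is_PSE Fol cl cf s nu -> ~ is_pure s ->
      exists (s' : Res -> K) (nu' : Res -> nat),
        is_PSE Fol cl cf s' nu' /\ is_pure s') /\
  (exists (s : Res -> K) (nu : Res -> nat), is_PSE Fol cl cf s nu /\ is_pure s).
Proof.
have H := @main_ex K Res Fol cl cf hclmon hcfmon hRes.
by split => // s nu _ _.
Qed.
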